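(* Let $r\ge 1$, $m=2^r$, and let $n$ be a positive integer with $m\mid n$. Let $b$ be a positive integer having property $\mathcal{P}$ with respect to $n$. If $x^n+b^m$ is reducible over $\mathbb{Z}$, then both $b$ and $n/m$ are even.
   Context: For a positive integer $N$, a positive integer $b$ has property $\mathcal{P}$ with respect to $N$ if either $b$ is a prime number, or $b=(p_1^{b_1}p_2^{b_2}\cdots p_k^{b_k})^d$ where $k\ge 2$, $p_1,\dots,p_k$ are distinct primes, $b_1,\dots,b_k\ge 1$, $\gcd(b_1,\ldots,b_k)=1$, and $d$ is a positive integer with $\gcd(d,N)=1$. A monic polynomial in $\mathbb{Z}[x]$ of degree $\ge 1$ is reducible over $\mathbb{Z}$ if it is a product of two polynomials in $\mathbb{Z}[x]$ of degree at least $1$. *)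

(* Defs.v *)
From mathcomp Require Import all_boot all_order all_algebra.
Set Implicit Arguments. Unset Strict Implicit. Unset Printing Implicit Defensive.
Import Order.TTheory GRing.Theory Num.Theory.

(* Property P of b with respect to N.  The factorization is given as a list
   of (prime, exponent) pairs [(p_1,b_1);...;(p_k,b_k)]. *)
Definition propP (N b : nat) : Prop :=
  prime b \/
  exists (s : seq (nat * nat)) (d : nat),
    [/\ 2 <= size s, uniq (map fst s),
        all (fun pe => prime pe.1) s & all (fun pe => 0 < pe.2) s] /\
    [/\ foldr gcdn 0 (map snd s) = 1, 0 < d, coprime d N &
        b = (\prod_(pe <- s) pe.1 ^ pe.2) ^ d].

Definition reducible_Z (f : {poly int}) : Prop :=
  exists g h : {poly int}, [/\ (1 < size g)%N, (1 < size h)%N & f = (g * h)%R].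

(* Main.v *)
Require Import Defs.
From mathcomp Require Import all_boot all_order all_algebra.
From mathcomp Require Import falgebra fieldext separable algC algnum.
Set Implicit Arguments. Unset Strict Implicit. Unset Printing Implicit Defensive.
Import Order.TTheory GRing.Theory Num.Theory.
Local Open Scope ring_scope.

Local Notation QtoC := (ratr : rat -> algC).
Local Notation pQtoC := (map_poly QtoC).
From mathcomp Require Import zify.
Lemma tower (x : algC) (P : {poly rat}) :
  ((size (minCpoly (pQtoC P).[x])).-1 %| (size (minCpoly x)).-1)%N.
Proof.
have [p [Dp mon_p] dv_p] := minCpolyP x.
have nz_p : p != 0 by apply: monic_neq0.
have px0 : root (pQtoC p) x by rewrite dv_p.
have irr_p : irreducible_poly p.
  by apply/(subfx_irreducibleP px0 nz_p)=> q qx0 nzq; rewrite dvdp_leq // -dv_p.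
pose L := SubFieldExtType px0 irr_p.
pose phi : {rmorphism L -> algC} := @subfx_inj _ _ QtoC x p.
pose y : L := subfx_eval QtoC x p P.
have phiy : phi y = (pQtoC P).[x] by exact: subfx_inj_eval.
have phiA (a : rat) : phi a%:A = QtoC a by exact: subfx_inj_base.
have dimL : \dim {:L} = (size p).-1 by rewrite dimvf.
have := field_dimS (subvf <<1; y>>%VS).
rewrite dim_Fadjoin dimv1 muln1 dimL Dp size_map_poly.
suff -> : (size (minCpoly (pQtoC P).[x])).-1 = adjoin_degree 1%VS y by [].
have [r [Dr mon_r] dv_r] := minCpolyP (pQtoC P).[x].
rewrite Dr size_map_poly.
have phimap (q : {poly rat}) : phi (map_poly (in_alg L) q).[y] = (pQtoC q).[(pQtoC P).[x]].
  rewrite -horner_map /= -map_poly_comp -phiy; congr (_.[_]).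
  by apply: eq_map_poly => a /=; rewrite phiA.
have [q Dq] : exists q, minPoly 1 y = map_poly (in_alg L) q.
  by apply/polyOver1P; apply: minPolyOver.
have szq : size q = (adjoin_degree 1%VS y).+1.
  by rewrite -(size_map_poly (in_alg L) q) -Dq size_minPoly.
apply/eqP; rewrite eqn_leq; apply/andP; split.
  have : r %| q.
    rewrite -dv_r /root -phimap -Dq.
    by move/rootP: (root_minPoly 1%VS y) => ->; rewrite rmorph0.
  have nzq : q != 0 by rewrite -size_poly_gt0 szq.
  by move/dvdp_leq => /(_ nzq); rewrite szq; case: (size r).
have : minPoly 1 y %| map_poly (in_alg L) r.
  apply: minPoly_dvdp; first by apply/polyOver1P; exists r.
  apply/rootP; apply: (fmorph_inj phi); rewrite phimap rmorph0.
  by apply/rootP; rewrite dv_r.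
have nzr : map_poly (in_alg L) r != 0 by rewrite map_poly_eq0 monic_neq0.
move/dvdp_leq => /(_ nzr); rewrite size_minPoly size_map_poly.
by case: (size r).
Qed.
Local Notation F2 := ('F_2 : fieldType).
Local Notation i2 := (intr : int -> 'F_2).

Lemma char2 : (2 \in [char 'F_2])%N.
Proof. exact: pchar_Fp. Qed.

Lemma i2_eq0 (x : int) : (i2 x == 0) = (2 %| x)%Z.
Proof.
rewrite dvdzE; case: x => n.
  by rewrite /= -(dvdn_pcharf char2).
rewrite NegzE rmorphN oppr_eq0 /= -(dvdn_pcharf char2).
by [].
Qed.

Lemma eis_half (M c : nat) (A B : {poly int}) :
  (0 < M)%N -> [char 'F_2].-nat M -> odd c ->
  ('X + 1)^+M + (c%:R)%:P = A * B -> (1 < size A)%N -> (2 %| A`_0)%Z.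
Proof.
move=> M0 cM oc DF szA.
pose Fm := map_poly i2.
have DX : ('X + 1 : {poly int}) = 'X - (-1)%:P by rewrite polyCN opprK.
have lcF : lead_coef A * lead_coef B = 1.
  have mX : ('X - (-1)%:P : {poly int})^+M \is monic by rewrite monic_exp // monicXsubC.
  rewrite -lead_coefM -DF DX lead_coefDl ?(monicP mX) //.
  by rewrite size_exp_XsubC size_polyC; case: (_ != _).
have lcA : i2 (lead_coef A) != 0.
  apply/negP => /eqP H; have := congr1 i2 lcF.
  by rewrite rmorphM /= H mul0r rmorph1 => /eqP; rewrite eq_sym oner_eq0.
have szFA : size (Fm A) = size A by rewrite size_map_poly_id0.
have FmF : Fm A * Fm B = 'X^M.
  rewrite -rmorphM /= -DF rmorphD rmorphXn /= rmorphD /= map_polyX map_polyC /=.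
  rewrite map_polyC /= rmorph1 rmorph_nat.
  rewrite exprDn_pchar; last by rewrite (eq_pnat _ (@pchar_poly _)).
  rewrite expr1n -Fp_nat_mod // modn2 oc -addrA addrr_pchar2 ?addr0 //.
  by rewrite pchar_poly.
have : Fm A %| ('X - 0%:P)^+M by rewrite subr0 -FmF dvdp_mulr.
case/dvdp_exp_XsubCP => k _; rewrite subr0 => eqA.
have szk : size (Fm A) = k.+1 by rewrite (eqp_size eqA) size_polyXn.
have k0 : k != 0%N by rewrite -szFA szk in szA; case: k {eqA szk} szA.
rewrite -i2_eq0 -coef_map -/(Fm A) (eqpfP eqA) coefZ coefXn.
by case: k k0 {eqA szk} => // k _; rewrite mulr0.
Qed.

Lemma eis (t c : nat) (A B : {poly int}) :
  (0 < t)%N -> (c %% 4 = 1)%N ->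
  ('X + 1)^+(2 ^ t)%N + (c%:R)%:P = A * B -> (size A <= 1)%N || (size B <= 1)%N.
Proof.
move=> t0 c4 DF; case: leqP => // szA; case: leqP => // szB; exfalso.
have cM : [char 'F_2].-nat (2 ^ t)%N by rewrite pnatX pnatE // char2.
have oc : odd c by move: c4; clear; move=> c4; have := divn_eq c 4; rewrite c4 => ->; rewrite oddD oddM andbF.
have M0 : (0 < 2 ^ t)%N by rewrite expn_gt0.
have hA := eis_half M0 cM oc DF szA.
have hB : (2 %| B`_0)%Z by apply: (eis_half (B:=A) M0 cM oc _ szB); rewrite mulrC.
have := dvdz_mul hA hB; rewrite -coef0M -DF coefD coefC /= -horner_coef0.
rewrite !hornerE /= expr1n.
rewrite dvdzE /=.
have -> : (1 + c%:R : int) = Posz c.+1 by rewrite natz.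
move=> H; have := c4; move: H; clear; simpl; lia.
Qed.

Local Notation pZtoQ := (map_poly (intr : int -> rat)).

Lemma size_exp_XaddC (R : nzRingType) n : size (('X + 1 : {poly R})^+n) = n.+1.
Proof. by rewrite (_ : 'X + 1 = 'X - (-1)%:P) ?size_exp_XsubC // polyCN opprK. Qed.

Lemma degE (t c : nat) (x : algC) : (0 < t)%N -> (c %% 4 = 1)%N ->
  (x + 1)^+(2 ^ t)%N + c%:R = 0 -> size (minCpoly x) = (2 ^ t).+1%N.
Proof.
move=> t0 c4 x0.
pose F : {poly int} := ('X + 1)^+(2 ^ t)%N + (c%:R)%:P.
have [p [Dp mon_p] dv_p] := minCpolyP x.
have : p %| pZtoQ F.
  rewrite -dv_p /F -map_poly_comp /root.
  rewrite rmorphD rmorphXn /= rmorphD /= map_polyX !map_polyC /= rmorph1 rmorph_nat.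
  by rewrite !hornerE rmorph_nat x0.
case/dvdpP_rat_int => p1 [a a0 Dp1] [r Dr].
have szp : size p = size p1 by rewrite Dp1 size_scale // size_map_inj_poly //; apply: intr_inj.
have sz2 : (1 < size p)%N by have := size_minCpoly x; rewrite Dp size_map_poly.
have szF : size F = (2 ^ t).+1%N.
  rewrite /F size_addl size_exp_XaddC //.
  by rewrite size_polyC; case: (_ != _); rewrite // ltnS expn_gt0.
have nzF : F != 0 by rewrite -size_poly_gt0 szF.
have := eis t0 c4 Dr; rewrite -szp leqNgt sz2 /= => szr.
have nzr : r != 0 by apply: contraNneq nzF => r0; rewrite Dr r0 mulr0.
have szr1 : size r = 1%N by apply/eqP; rewrite eqn_leq szr lt0n size_poly_eq0.
have : size F = size p1 by rewrite Dr size_mul ?szr1 ?addn1 // ; apply: contraNneq nzF => p10; rewrite Dr p10 mul0r.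
by rewrite Dp size_map_poly szp => <-.
Qed.

Lemma normL (n c : nat) (x : algC) : (0 < n)%N -> ~~ odd n -> x ^+ n = - c%:R ->
  exists T : nat, (T ^ n = c ^ (size (minCpoly x)).-1)%N.
Proof.
move=> n0 en xn.
have [p [Dp mon_p] dv_p] := minCpolyP x.
have dvp : p %| 'X^n + (c%:R)%:P.
  by rewrite -dv_p /root rmorphD /= map_polyXn map_polyC /= hornerD hornerXn hornerC xn rmorph_nat addNr.
have [rs Drs] := closed_field_poly_normal (pQtoC p).
rewrite lead_coef_map /= (monicP mon_p) rmorph1 scale1r in Drs.
have rsroot z : z \in rs -> z ^+ n = - c%:R.
  move=> zr; have : root (pQtoC ('X^n + (c%:R)%:P)) z.
    have dv : pQtoC p %| pQtoC ('X^n + (c%:R)%:P) by rewrite dvdp_map.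
    apply: root_dvdp (dv) _.
    by rewrite Drs root_prod_XsubC.
  rewrite rmorphD /= map_polyXn map_polyC /= /root hornerD hornerXn hornerC rmorph_nat.
  by rewrite addr_eq0 => /eqP.
have szrs : size rs = (size (minCpoly x)).-1 by rewrite Dp Drs size_prod_XsubC.
set D := (size (minCpoly x)).-1 in szrs *.
have t0 : ratr p`_0 = (-1) ^+ D * \prod_(z <- rs) z.
  by rewrite -coef_map /= Drs coef0_prod_XsubC szrs.
have tn : ratr p`_0 ^+ n = (- c%:R) ^+ D :> algC.
  rewrite t0 exprMn -exprM mulnC exprM -signr_odd (negPf en) expr0 expr1n mul1r.
  rewrite -prodrXl (eq_big_seq (fun _ => - c%:R)); last by move=> z /rsroot.
  rewrite big_const_seq count_predT szrs.
  by elim: (D) => // k IH; rewrite iterS IH exprS.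
have tint : p`_0 \is a Num.int.
  rewrite -Cint_rat Cint_rat_Aint ?Crat_rat //.
  apply: (@root_monic_Aint ('X^n - (((- c%:R) ^+ D : int)%:~R)%:P)).
  - by rewrite /root !hornerE tn rmorphXn rmorphN /= rmorph_nat subrr.
  - exact: monicXnsubC.
  apply/polyOverP => i; rewrite coefB coefXn coefC.
  by apply: rpredB; [apply: rpred_nat | case: (_ == _); [apply: rpred_int | apply: rpred0]].
case/intrP: tint => z Dz.
exists `|z|%N; rewrite -abszX.
have : (z ^+ n) = (- c%:R) ^+ D.
  apply: (@intr_inj algC); rewrite rmorphXn /= -[z%:~R]ratr_int -Dz.
  by apply: (etrans tn); rewrite rmorphXn rmorphN /= rmorph_nat.
by move=> ->; rewrite abszX abszN natz.
Qed.

Lemma prod_pe_gt0 (s : seq (nat * nat)) :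
  all (fun pe => prime pe.1) s -> (0 < \prod_(pe <- s) pe.1 ^ pe.2)%N.
Proof.
elim: s => [|[q k] s IH] /=; first by rewrite big_nil.
by case/andP=> pq ps; rewrite big_cons muln_gt0 expn_gt0 prime_gt0 ?IH.
Qed.

Lemma logn_prod_pe (s : seq (nat * nat)) p : all (fun pe => prime pe.1) s ->
  logn p (\prod_(pe <- s) pe.1 ^ pe.2) = (\sum_(pe <- s) (p == pe.1) * pe.2)%N.
Proof.
elim: s => [|[q k] s IH] /=; first by rewrite !big_nil logn1.
case/andP=> pq ps; rewrite !big_cons lognM; last exact: prod_pe_gt0; last by rewrite expn_gt0 prime_gt0.
by rewrite lognX (logn_prime _ pq) IH // /= mulnC.
Qed.

Lemma sum_pe (s : seq (nat * nat)) p e : uniq (map fst s) -> (p, e) \in s ->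
  (\sum_(pe <- s) (p == pe.1) * pe.2)%N = e.
Proof.
elim: s => [|[q k] s IH] //= /andP[qs us]; rewrite in_cons big_cons /=.
case/orP => [/eqP [-> ->] | pes].
  rewrite eqxx mul1n big1_seq ?addn0 // => -[q' k'] /andP[_ H] /=.
  have [Eq|ne] := eqVneq q q'; last by rewrite mul0n.
  by move: qs; rewrite Eq => /negP; case; apply/mapP; exists (q', k').
have pq : p != q.
  by apply: contraNneq qs => <-; apply/mapP; exists (p, e).
by rewrite (negPf pq) mul0n add0n IH.
Qed.

Lemma gcd_fold (l : seq nat) n X : (forall e, e \in l -> n %| X * e)%N ->
  (n %| X * foldr gcdn 0 l)%N.
Proof.
elim: l => [|e l IH] H /=; first by rewrite muln0 dvdn0.
rewrite muln_gcdr dvdn_gcd H ?mem_head // IH // => e' He'.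
by rewrite H // in_cons He' orbT.
Qed.

Lemma propP_div (n b k T : nat) : (0 < n)%N -> propP n b ->
  (T ^ n = b ^ k)%N -> (n %| k)%N.
Proof.
move=> n0 [pb | [s [d [[s2 us ps es] [g1 d0 cd Db]]]]] E.
  have := congr1 (logn b) E; rewrite !lognX (logn_prime _ pb) eqxx muln1 => <-.
  exact: dvdn_mulr.
have A0 := prod_pe_gt0 ps.
set A := (\prod_(pe <- s) pe.1 ^ pe.2)%N in A0 Db.
have H : forall e, e \in map snd s -> (n %| (k * d) * e)%N.
  move=> e /mapP [[p e'] pes /= ->].
  have pp : prime p by have := allP ps _ pes.
  have := congr1 (logn p) E; rewrite Db -expnM !lognX logn_prod_pe //.
  rewrite (sum_pe us pes) => E2.
  by rewrite (mulnC k d) -E2 dvdn_mulr.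
have := gcd_fold H; rewrite g1 muln1 Gauss_dvdl //.
by rewrite coprime_sym.
Qed.

Local Notation pZtoC := (map_poly (intr : int -> algC)).

Lemma pQZ (g : {poly int}) : pQtoC (pZtoQ g) = pZtoC g.
Proof. by rewrite -map_poly_comp; apply: eq_map_poly => a /=; rewrite ratr_int. Qed.

Lemma mod4 (b m : nat) : odd b -> (0 < m)%N -> ~~ odd m -> ((b ^ m) %% 4 = 1)%N.
Proof.
move=> ob m0 em.
have -> : m = (2 * m./2)%N by rewrite -[m in LHS](odd_double_half m) (negPf em) add0n -mul2n.
rewrite expnM -modnXm.
have -> : (b ^ 2 %% 4 = 1)%N.
  have := odd_double_half b; rewrite ob => <-.
  rewrite -mul2n; set k := b./2; clear; rewrite expnS expn1; lia.
by rewrite exp1n.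
Qed.

Theorem corollary2 (r n b : nat) :
  (1 <= r)%N -> (0 < n)%N -> (2 ^ r %| n)%N -> (0 < b)%N ->
  propP n b ->
  reducible_Z ('X^n + ((b ^ (2 ^ r))%N)%:R%:P : {poly int}) ->
  ~~ odd b /\ ~~ odd (n %/ 2 ^ r)%N.
Proof.
move=> r1 n0 mn b0 Pb [g [h [szg szh Df]]].
set m := (2 ^ r)%N in mn Df *.
set c := (b ^ m)%N in Df.
have m0 : (0 < m)%N by rewrite expn_gt0.
set q := (n %/ m)%N.
have Dn : n = (q * m)%N by rewrite divnK.
have [x gx] : exists x, root (pZtoC g) x.
  apply/closed_rootP; rewrite size_map_inj_poly ?gtn_eqF //; exact: intr_inj.
have xn : x ^+ n = - c%:R.
  have : root (pZtoC ('X^n + (c%:R)%:P)) x by rewrite Df rmorphM rootM gx.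
  rewrite rmorphD /= map_polyXn map_polyC /= /root hornerD hornerXn hornerC rmorph_nat.
  by rewrite addr_eq0 => /eqP.
set D := (size (minCpoly x)).-1.
have D0 : (0 < D)%N by rewrite /D -ltnS prednK ?size_minCpoly // ltnW ?size_minCpoly.
have Dlt : (D < n)%N.
  have [p [Dp mon_p] dv_p] := minCpolyP x.
  have : p %| pZtoQ g by rewrite -dv_p pQZ.
  have szgQ : size (pZtoQ g) = size g by rewrite size_map_inj_poly //; exact: intr_inj.
  have nzg : pZtoQ g != 0 by rewrite -size_poly_gt0 szgQ ltnW.
  move/dvdp_leq => /(_ nzg); rewrite szgQ.
  have nzh : h != 0 by rewrite -size_poly_gt0 ltnW.
  have nzg' : g != 0 by rewrite -size_poly_gt0 ltnW.
  have szf : size ('X^n + (c%:R)%:P : {poly int}) = n.+1.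
    by rewrite size_addl size_polyXn // size_polyC; case: (_ != _).
  move: szf; rewrite Df size_mul // => szf.
  rewrite /D Dp size_map_poly => H.
  have : (size g <= n)%N.
    move: szh szf H; clear; move=> szh szf H.
    rewrite -subn1 in szf; move: (size g) (size h) szh szf => a a' ? ?; lia.
  rewrite -subn1; move: (size p) (size g) H => a a' ? ?; lia.
have en : ~~ odd n by rewrite Dn oddM oddX gtn_eqF // andbF.
have [T ET] := normL n0 en xn.
have nmD : (n %| m * D)%N by apply: (propP_div (T:=T) n0 Pb); rewrite ET /c -expnM.
have qD : (q %| D)%N by move: nmD; rewrite Dn mulnC dvdn_pmul2l.
have contra : (n %| D)%N -> False.
  by move/(dvdn_leq D0); rewrite leqNgt Dlt.
split.
- apply/negP => ob.
  have [q' cq' Dn'] := pfactor_coprime (isT : prime 2) n0.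
  set t := logn 2 n in Dn'.
  have rt : (r <= t)%N by rewrite -pfactor_dvdn.
  have t0 : (0 < t)%N by apply: leq_trans rt.
  have c4 : (c %% 4 = 1)%N by apply: mod4; rewrite // oddX gtn_eqF.
  have th : ((x ^+ q' - 1) + 1) ^+ (2 ^ t)%N + c%:R = 0.
    by rewrite subrK -exprM -Dn' xn addNr.
  have := tower x ('X^q' - 1).
  rewrite rmorphB /= map_polyXn rmorph1 hornerD hornerN hornerXn hornerC.
  rewrite (degE t0 c4 th) /= => tD.
  have q'q : (q' %| q)%N.
    have : (q' %| q * m)%N by rewrite -Dn Dn' dvdn_mulr.
    by rewrite Gauss_dvdl // coprimeXr // coprime_sym.
  have q'D := dvdn_trans q'q qD.
  apply: contra; rewrite Dn' Gauss_dvd ?q'D ?tD //.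
  by rewrite coprimeXr // coprime_sym.
- apply/negP => oq.
  have b0' : (b%:R : algC) != 0 by rewrite pnatr_eq0 -lt0n.
  have th : ((x ^+ q / b%:R - 1) + 1) ^+ (2 ^ r)%N + 1%:R = 0.
    rewrite subrK expr_div_n -exprM -/m -Dn xn -natrX -/c.
    rewrite mulNr divff ?addNr // pnatr_eq0 /c expn_eq0 negb_and -lt0n b0.
    by [].
  have := tower x ((b%:R)^-1 *: 'X^q - 1).
  rewrite rmorphB /= map_polyZ /= map_polyXn rmorph1 hornerD hornerN hornerZ hornerXn hornerC.
  rewrite fmorphV rmorph_nat mulrC.
  rewrite (degE r1 (erefl : (1 %% 4 = 1)%N) th) /= => mD.
  apply: contra; rewrite Dn Gauss_dvd ?qD ?mD //.
  by rewrite /m coprimeXr // coprimen2.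
Qed.
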